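(* Let $s\ge 0$ and $\Gamma_1,\Gamma_2\subseteq\{0,1\}^\infty$. If a learning function $l_1$ $s$-learns every $X\in\Gamma_1$ and a learning function $l_2$ $s$-learns every $X\in\Gamma_2$, then there exists a learning function $l_3$ that $s$-learns every $X\in\Gamma_1\cup\Gamma_2$.
   Context: A learning function is a function $l:\{0,1\}^*\to\{0,1\}$ (identifying yes with $1$ and no with $0$). $Y\upharpoonright i$ is the length-$i$ prefix of $Y$; $\lambda$ is the uniform (Lebesgue) measure on $\{0,1\}^\infty$. For a nonempty string $w$, the path average is $\mathrm{AVG}_l(w)=\frac{1}{|w|}\sum_{i=0}^{|w|} l(w\upharpoonright i)$. A learning function $l$ satisfies the measure condition if for all $n\in\mathbb N$, $\lambda(\{Y\in\{0,1\}^\infty : \#\{i\in\mathbb N: l(Y\upharpoonright i)=1\}\ge n\})\le 2^{-n}$. For $s\ge0$, $l$ $s$-learns $X$ iff $l$ satisfies the measure condition and $\limsup_{n\to\infty}\mathrm{AVG}_l(X\upharpoonright n)\ge 1-s$ (no computability restriction on $l$). *)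

(* Defs.v *)
From mathcomp Require Import all_boot all_order all_algebra.
From mathcomp Require Import all_classical all_reals all_analysis.
Set Implicit Arguments. Unset Strict Implicit. Unset Printing Implicit Defensive.
Import Order.TTheory GRing.Theory Num.Theory.
Local Open Scope classical_set_scope.
Local Open Scope ring_scope.

Definition prefix (Y : nat -> bool) (i : nat) : seq bool := mkseq Y i.

(* Learning function: {0,1}^* -> {0,1} (true = yes = 1). *)
Definition learning_function := seq bool -> bool.

Definition cylinder (w : seq bool) : set (nat -> bool) :=
  [set Y | prefix Y (size w) = w].

(* Uniform (Lebesgue) outer measure on Cantor space, defined as the infimum
   over countable cylinder covers (entries None = no cylinder) of the sum of
   2^{-|w|}.  On measurable sets this is the uniform measure lambda. *)
Definition cover_weight (R : realType) (c : option (seq bool)) : R :=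
  match c with Some w => (2 ^- size w) | None => 0 end.

Definition lambda (R : realType) (A : set (nat -> bool)) : \bar R :=
  ereal_inf [set x : \bar R | exists C : nat -> option (seq bool),
     (A `<=` \bigcup_(k in [set: nat])
                 (match C k with Some w => cylinder w | None => set0 end))
     /\ x = (\sum_(0 <= k <oo) ((cover_weight R (C k))%:E))%E].

Definition at_least_ones (l : learning_function) (Y : nat -> bool) (n : nat) : Prop :=
  exists N : nat, (n <= \sum_(i < N) (l (prefix Y i) : nat))%N.

Definition measure_condition (R : realType) (l : learning_function) : Prop :=
  forall n : nat, (lambda R [set Y | at_least_ones l Y n] <= ((2 : R) ^- n)%:E)%E.

Definition AVG (R : realType) (l : learning_function) (w : seq bool) : R :=
  (\sum_(i < (size w).+1) ((l (take i w) : nat)%:R : R)) / (size w)%:R.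

(* l s-learns X. The sequence is indexed by n; the term n = 0 (empty prefix,
   where AVG is undefined) does not affect the limsup. *)
Definition s_learns (R : realType) (s : R) (l : learning_function) (X : nat -> bool) : Prop :=
  measure_condition R l /\
  ((1 - s)%:E <= limn_esup (fun n : nat => (AVG R l (prefix X n))%:E))%E.

(* Main.v *)
Require Import Defs.
From mathcomp Require Import all_boot all_order all_algebra.
From mathcomp Require Import all_classical all_reals all_analysis.
From mathcomp Require Import lra zify.
Import Order.TTheory GRing.Theory Num.Theory.
Local Open Scope classical_set_scope.
Local Open Scope ring_scope.

Section S.
Variable R : realType.

Lemma interleave_real (w1 w2 : nat -> R) M :
  \sum_(0 <= i < M.*2) (if odd i then w2 i./2 else w1 i./2)
  = \sum_(0 <= i < M) w1 i + \sum_(0 <= i < M) w2 i.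
Proof.
elim: M => [|M IH]; first by rewrite !big_geq // addr0.
rewrite doubleS !big_nat_recr //= IH.
rewrite odd_double /= -[(M.*2)./2]/(M.*2)./2 doubleK uphalf_double.
by rewrite -!addrA; congr (_ + _); rewrite addrC -addrA; congr (_ + _); rewrite addrC.
Qed.

Local Open Scope ereal_scope.
Lemma interleave_le (w1 w2 : nat -> R) : (forall k, (0 <= w1 k)%R) -> (forall k, (0 <= w2 k)%R) ->
  \sum_(0 <= k <oo) ((if odd k then w2 k./2 else w1 k./2)%:E)
   <= \sum_(0 <= k <oo) (w1 k)%:E + \sum_(0 <= k <oo) (w2 k)%:E.
Proof.
move=> h1 h2.
have f0 : forall k, (0 <= (if odd k then w2 k./2 else w1 k./2))%R by move=> k; case: odd.
apply: lime_le; first by apply: is_cvg_nneseries => n _ _; rewrite lee_fin.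
apply: nearW => N.
apply: (@le_trans _ _ (\sum_(0 <= i < N.*2) (if odd i then w2 i./2 else w1 i./2)%:E)).
  rewrite (@big_cat_nat _ _ _ N 0 N.*2) //=; last by rewrite -addnn leq_addr.
  rewrite leeDl //; apply: sume_ge0 => i _; rewrite lee_fin; exact: f0.
rewrite (@sumEFin R _ _ _ (fun i => if odd i then w2 i./2 else w1 i./2)) interleave_real EFinD -!sumEFin.

by apply: leeD; apply: nneseries_lim_ge => n _ _; rewrite lee_fin.
Qed.

Lemma cw_ge0 c : (0 <= cover_weight R c)%R.
Proof. by case: c => [w|] //=; rewrite invr_ge0 exprn_ge0. Qed.

Lemma lambda_mono A B : A `<=` B -> lambda R A <= lambda R B.
Proof.
move=> AB; apply: ereal_inf_le_tmp => x [C [cov ->]]; exists C; split=> //.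
exact: subset_trans AB cov.
Qed.

Lemma lambda_union A B a b : lambda R A <= a%:E -> lambda R B <= b%:E ->
  lambda R (A `|` B) <= (a + b)%:E.
Proof.
move=> hA hB; apply/lee_addgt0Pr => e e0.
have e2 : (0 < e / 2)%R by rewrite divr_gt0.
have /ereal_inf_lt [x1 [C1 [cov1 ->]] lt1] : lambda R A < (a + e/2)%:E.
  by apply: le_lt_trans hA _; rewrite lte_fin ltrDl.
have /ereal_inf_lt [x2 [C2 [cov2 ->]] lt2] : lambda R B < (b + e/2)%:E.
  by apply: le_lt_trans hB _; rewrite lte_fin ltrDl.
pose C := fun k => if odd k then C2 k./2 else C1 k./2.
apply: (@le_trans _ _ (\sum_(0 <= k <oo) (cover_weight R (C k))%:E)).
  apply: ereal_inf_lbound; exists C; split => //.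
  move=> Y [/cov1 [k _ Hk] | /cov2 [k _ Hk]]; [exists k.*2 | exists k.*2.+1] => //.
    by rewrite /C odd_double doubleK.
  by rewrite /C /= odd_double /= uphalf_double.
rewrite (@eq_eseriesr _ _ (fun k =>
   ((if odd k then cover_weight R (C2 k./2) else cover_weight R (C1 k./2))%:E))); last first.
  by move=> k _; rewrite /C; case: odd.
apply: le_trans (@interleave_le (fun k => cover_weight R (C1 k))
   (fun k => cover_weight R (C2 k)) (fun k => cw_ge0 _) (fun k => cw_ge0 _)) _.
apply: le_trans (leeD (ltW lt1) (ltW lt2)) _.
by rewrite -EFinD lee_fin; lra.
Qed.
End S.

Section Comb.
Definition cnt (l : learning_function) (w : seq bool) : nat :=
  (\sum_(i < size w) l (take i w))%N.
Definition cntY (l : learning_function) (Y : nat -> bool) N : nat :=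
  (\sum_(i < N) l (Defs.prefix Y i))%N.
Definition l3 (l1 l2 : learning_function) : learning_function := fun w =>
  (maxn (cnt l1 w) (cnt l2 w) < maxn (cnt l1 w + l1 w) (cnt l2 w + l2 w))%N
  && (0 < maxn (cnt l1 w) (cnt l2 w))%N.

Lemma take_prefix Y N i : (i <= N)%N -> take i (Defs.prefix Y N) = Defs.prefix Y i.
Proof. by move=> iN; rewrite /prefix /mkseq -map_take take_iota (minn_idPl iN). Qed.

Lemma size_prefix Y N : size (Defs.prefix Y N) = N.
Proof. by rewrite size_mkseq. Qed.

Lemma cnt_prefix l Y N : cnt l (Defs.prefix Y N) = cntY l Y N.
Proof.
rewrite /cnt /cntY size_prefix; apply: eq_bigr => i _.
by rewrite take_prefix // ltnW.
Qed.

Lemma cntY_S l Y N : cntY l Y N.+1 = (cntY l Y N + l (Defs.prefix Y N))%N.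
Proof. by rewrite /cntY big_ord_recr. Qed.

Lemma cntY_l3 l1 l2 Y N :
  cntY (l3 l1 l2) Y N = (maxn (cntY l1 Y N) (cntY l2 Y N)).-1.
Proof.
elim: N => [|N IH]; first by rewrite /cntY !big_ord0.
rewrite cntY_S IH /l3 !cnt_prefix -!cntY_S.
rewrite !cntY_S.
case: (l1 (Defs.prefix Y N)); case: (l2 (Defs.prefix Y N));
set a := cntY l1 Y N; set b := cntY l2 Y N;
case: (ltnP (maxn a b) _) => h; case: (posnP (maxn a b)) => h' /=; lia.
Qed.
End Comb.

Lemma esup_shift (R : realType) (u v : R^nat) : (forall n, u n - n%:R^-1 <= v n) ->
  (limn_esup (fun n => (u n)%:E) <= limn_esup (fun n => (v n)%:E))%E.
Proof.
move=> huv; rewrite !limn_esup_lim.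
rewrite (cvg_lim (@ereal_hausdorff R) (@cvg_esups_inf _ (fun n => (u n)%:E))).
rewrite (cvg_lim (@ereal_hausdorff R) (@cvg_esups_inf _ (fun n => (v n)%:E))).
apply/lee_addgt0Pr => e e0.
rewrite -leeBlDr //.
apply: le_ereal_inf_tmp => _ [m _ <-].
pose M := (Num.truncn e^-1).+1.
have hM : M%:R^-1 < e.
  by rewrite -[e]invrK ltf_pV2 ?posrE ?invr_gt0 ?ltr0n // truncnS_gt.
pose k := maxn m M.
apply: le_trans (_ : (esups (fun n => (u n)%:E) k - e%:E <= _)%E).
  by rewrite leeD2r //; apply: ereal_inf_lbound; exists k.
rewrite leeBlDr //; apply: ge_ereal_sup => _ [j /= kj <-].
have Mj : (M <= j)%N by apply: leq_trans kj; rewrite leq_maxr.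
have mj : (m <= j)%N by apply: leq_trans kj; rewrite leq_maxl.
apply: (@le_trans _ _ ((v j)%:E + e%:E)%E).
  rewrite -EFinD lee_fin.
  have hj : j%:R^-1 <= M%:R^-1 :> R.
    by rewrite lef_pV2 ?posrE ?ltr0n ?ler_nat // (leq_trans _ Mj).
  have := huv j; lra.
rewrite leeD2r //; apply: ereal_sup_ubound; exists j => //.

Qed.

Lemma mc_l3 (R : realType) l1 l2 : measure_condition R l1 -> measure_condition R l2 ->
  measure_condition R (l3 l1 l2).
Proof.
move=> h1 h2 [|n].
  apply: le_trans (h1 0%N); apply: lambda_mono => Y _; exists 0%N.
  by rewrite big_ord0.
apply: (@le_trans _ _ (lambda R ([set Y | at_least_ones l1 Y n.+2] `|`
                                 [set Y | at_least_ones l2 Y n.+2]))).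
  apply: lambda_mono => Y [N hN].
  have := hN; rewrite -/(cntY _ Y N) cntY_l3 => hN'.
  have [h|h] : (n.+2 <= cntY l1 Y N \/ n.+2 <= cntY l2 Y N)%N by move: hN'; rewrite -subn1; lia.
    by left; exists N.
  by right; exists N.
apply: le_trans (@lambda_union R _ _ _ _ (h1 n.+2) (h2 n.+2)) _.
rewrite lee_fin exprS invfM [_^-1 * _]mulrC -splitr.
by [].
Qed.

Lemma AVG_prefix (R : realType) l X n :
  AVG R l (Defs.prefix X n) = (cntY l X n.+1)%:R / n%:R.
Proof.
rewrite /AVG size_prefix /cntY natr_sum; congr (_ / _); apply: eq_bigr => i _.
by rewrite take_prefix // -ltnS.
Qed.

Lemma AVG_l3_ge (R : realType) l1 l2 X n :
  AVG R l1 (Defs.prefix X n) - n%:R^-1 <= AVG R (l3 l1 l2) (Defs.prefix X n).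
Proof.
rewrite !AVG_prefix cntY_l3.
set c := cntY l1 X n.+1; set D := maxn _ _.
have : (c <= (D.-1).+1)%N by rewrite /D /c -subn1; lia.
rewrite -(ler_nat R) -natr1 => hc.
rewrite -[X in _ - X <= _]mul1r -mulrBl; apply: ler_wpM2r; first by rewrite invr_ge0.
lra.
Qed.

Theorem mainTheorem4 (R : realType) (s : R) (G1 G2 : set (nat -> bool))
    (l1 l2 : learning_function) :
  0 <= s ->
  (forall X, G1 X -> s_learns s l1 X) ->
  (forall X, G2 X -> s_learns s l2 X) ->
  exists l3 : learning_function, forall X, (G1 `|` G2) X -> s_learns s l3 X.
Proof.
move=> _ H1 H2.
have [[X1 G1X1]|G10] := pselect (exists X, G1 X); last first.
  exists l2 => X [G1X|//]; last exact: H2.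
  by exfalso; apply: G10; exists X.
have [[X2 G2X2]|G20] := pselect (exists X, G2 X); last first.
  exists l1 => X [//|G2X]; first exact: H1.
  by exfalso; apply: G20; exists X.
have mc1 := (H1 _ G1X1).1; have mc2 := (H2 _ G2X2).1.
exists (l3 l1 l2) => X HX; split; first exact: mc_l3.
case: HX => [/H1 [_ h]|/H2 [_ h]]; apply: (le_trans h); apply: esup_shift => n.
  exact: AVG_l3_ge.
have := AVG_l3_ge R l2 l1 X n.
suff -> : l3 l2 l1 = l3 l1 l2 by [].
by apply: funext => w; rewrite /l3 maxnC [maxn (_ + _) _]maxnC.
Qed.
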